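(* Let $L_0$ be the boundary value problem on the tree $G$ (with $m$ edges, vertex set $V$ and boundary conditions BC) with $\sigma_j\equiv0$ and $\gamma_j=0$ for all $j$, and let $\Delta_0(\lambda)$ be its characteristic function. Then, as $\rho=i\tau$, $\tau\to+\infty$, $$\Delta_0(\rho^2)=\tau^{1-d}\,2^{-m}\prod_{v\in V}|E_v|\,\exp(m\tau\pi)\,(1+o(1)),$$ where $d$ is the number of Dirichlet conditions among BC and $|E_v|$ is the degree of $v$.
   Context: Let $G$ be a finite tree with vertex set $V$ and edges $e_1,\dots,e_m$ ($m\ge1$), all of length $\pi$; $E_v$ is the set of edges incident to $v$. Vertices of degree $1$ are boundary vertices, the others internal. Each edge $e_j$ is parametrized by $x_j\in[0,\pi]$. For the zero-potential problem all quasi-derivatives are ordinary derivatives. The problem $L_0$: $-y_j''=\lambda y_j$ on $(0,\pi)$, $j=1,\dots,m$; at each internal vertex $v$, continuity $y_j(v)=y_k(v)$ ($e_j,e_k\in E_v$) and Kirchhoff's condition $\sum_{e_j\in E_v}y_j^{[1]}(v)=0$, where $y_j^{[1]}(v)=-y_j'(0)$ if $v$ corresponds to $x_j=0$ and $y_j^{[1]}(v)=y_j'(\pi)$ if $v$ corresponds to $x_j=\pi$; at each boundary vertex either Dirichlet $y(v)=0$ or Neumann $y^{[1]}(v)=0$ (a fixed choice BC). Let $C_j,S_j$ solve $-y''=\lambda y$ with $C_j(0)=S_j'(0)=1$, $C_j'(0)=S_j(0)=0$. The characteristic function is defined recursively: for $m=1$, it is $S_1(\pi,\lambda)$, $S_1'(\pi,\lambda)$,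 $C_1(\pi,\lambda)$, $C_1'(\pi,\lambda)$ for the conditions $y(0)=y(\pi)=0$, $y(0)=y'(\pi)=0$, $y'(0)=y(\pi)=0$, $y'(0)=y'(\pi)=0$ respectively; for $m>1$, choose an internal vertex $u$ of degree $s$, split $G$ at $u$ into subtrees $G_1,\dots,G_s$, let $\Delta_j^D,\Delta_j^N$ be characteristic functions of the analogous problems on $G_j$ with Dirichlet, resp. Neumann, condition at $u$ (other conditions unchanged), and set $\Delta=\sum_{j}\Delta_j^N\prod_{k\ne j}\Delta_k^D$. Here $\rho=\sqrt\lambda$, $\mathrm{Re}\,\rho\ge 0$. *)

(* Defs.v *)
From HB Require Import structures.
From mathcomp Require Import all_boot all_order all_algebra complex.
From mathcomp Require Import all_classical all_reals all_analysis.
Set Implicit Arguments. Unset Strict Implicit. Unset Printing Implicit Defensive.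
Import Order.TTheory GRing.Theory Num.Theory.
Local Open Scope complex_scope.
Local Open Scope ring_scope.

Definition coshR (R : realType) (y : R) : R := (expR y + expR (- y)) / 2.
Definition sinhR (R : realType) (y : R) : R := (expR y - expR (- y)) / 2.

Definition ccos (R : realType) (z : R[i]) : R[i] :=
  let: a +i* b := z in (cos a * coshR b) +i* (- (sin a * sinhR b)).
Definition csin (R : realType) (z : R[i]) : R[i] :=
  let: a +i* b := z in (sin a * coshR b) +i* (cos a * sinhR b).

(* Zero potential: C(x,l) = cos(rho x), S(x,l) = sin(rho x)/rho, l = rho^2. *)
(* All functions below are functions of rho and give the value at          *)
(* lambda = rho^2 (they are even in rho).                                  *)
Definition Spi (R : realType) (rho : R[i]) : R[i] :=
  if rho == 0 then (pi : R)%:C else csin (rho * (pi : R)%:C) / rho.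
Definition dSpi (R : realType) (rho : R[i]) : R[i] := ccos (rho * (pi : R)%:C).
Definition Cpi (R : realType) (rho : R[i]) : R[i] := ccos (rho * (pi : R)%:C).
Definition dCpi (R : realType) (rho : R[i]) : R[i] :=
  - rho * csin (rho * (pi : R)%:C).

(* Boundary conditions are booleans: true = Dirichlet, false = Neumann.
   [base_charfun b0 b1] is the characteristic function of the one-edge
   problem with condition b0 at x = 0 and b1 at x = pi. *)
Definition base_charfun (R : realType) (b0 b1 : bool) : R[i] -> R[i] :=
  match b0, b1 with
  | true, true => @Spi R
  | true, false => @dSpi R
  | false, true => @Cpi R
  | false, false => @dCpi R
  end.

(* Graphs: a graph on the vertex type V is a list of edges; edge (a, b) is *)
(* parametrized by x in [0, pi] with a at x = 0 and b at x = pi.           *)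
Section Graphs.
Variable V : finType.
Implicit Types (es : seq (V * V)) (v : V).

Definition incident v (e : V * V) : bool := (e.1 == v) || (e.2 == v).

Definition vset es : {set V} := [set v | has (incident v) es].

Definition deg es v : nat := count (incident v) es.

Definition adj es : rel V := [rel x y | ((x, y) \in es) || ((y, x) \in es)].

Definition is_tree es : bool :=
  [&& es != [::],
      [forall x in vset es, forall y in vset es, connect (adj es) x y]
    & size es == #|vset es|.-1].

Definition bc_at (bc : V -> bool) (u : V) (b : bool) : V -> bool :=
  fun v => if v == u then b else bc v.

Definition n_dirichlet es (bc : V -> bool) : nat :=
  #|[set v in vset es | (deg es v == 1%N) && bc v]|.
End Graphs.

(* [charfun es bc D] : D is a characteristic function of the problem L_0 on *)
(* the tree es with boundary conditions bc (for some admissible sequence   *)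
(* of choices of splitting vertices).  D rho is the value at lambda=rho^2. *)
Inductive charfun (R : realType) (V : finType)
  : seq (V * V) -> (V -> bool) -> (R[i] -> R[i]) -> Prop :=
| cf_edge (a b : V) (bc : V -> bool) :
    a != b -> charfun [:: (a, b)] bc (@base_charfun R (bc a) (bc b))
| cf_split (es : seq (V * V)) (bc : V -> bool) (u : V) (s : nat)
    (parts : 'I_s -> seq (V * V)) (DD DN : 'I_s -> R[i] -> R[i]) :
    is_tree es ->
    (1 < deg es u)%N ->
    perm_eq (flatten [seq parts i | i <- enum 'I_s]) es ->
    (forall i, is_tree (parts i)) ->
    (forall i, deg (parts i) u = 1%N) ->
    (forall i j, i != j -> vset (parts i) :&: vset (parts j) = [set u]) ->
    (forall i, charfun (parts i) (bc_at bc u true) (DD i)) ->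
    (forall i, charfun (parts i) (bc_at bc u false) (DN i)) ->
    charfun es bc
      (fun rho => \sum_(i < s) DN i rho * \prod_(k < s | k != i) DD k rho).

Definition main_term (R : realType) (V : finType) (es : seq (V * V))
  (bc : V -> bool) (tau : R) : R :=
  tau ^ (1%:Z - (n_dirichlet es bc)%:Z) * (2 ^- size es)
  * (\prod_(v in vset es) (deg es v)%:R) * expR ((size es)%:R * tau * pi).

(* Main.v *)
Require Import Defs.
From HB Require Import structures.
From mathcomp Require Import all_boot all_order all_algebra complex.
From mathcomp Require Import all_classical all_reals all_analysis.
From mathcomp Require Import ring lra.
Import Order.TTheory GRing.Theory Num.Theory.
Import numFieldNormedType.Exports.
Local Open Scope classical_set_scope.
Local Open Scope complex_scope.
Local Open Scope ring_scope.
Section Comb.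
Variable V : finType.
Implicit Types (es : seq (V * V)).

Lemma in_vset es v : (v \in vset es) = (0 < deg es v)%N.
Proof. by rewrite inE /deg has_count. Qed.

Lemma deg_split es s (parts : 'I_s -> seq (V * V)) v :
  perm_eq (flatten [seq parts i | i <- enum 'I_s]) es ->
  deg es v = (\sum_(i < s) deg (parts i) v)%N.
Proof.
move=> /permP H; rewrite /deg -H count_flatten -map_comp.
by rewrite sumnE big_map big_enum.
Qed.

Lemma size_split es s (parts : 'I_s -> seq (V * V)) :
  perm_eq (flatten [seq parts i | i <- enum 'I_s]) es ->
  size es = (\sum_(i < s) size (parts i))%N.
Proof.
move=> H; rewrite -(perm_size H) size_flatten /shape -map_comp.
by rewrite sumnE big_map big_enum.
Qed.

Lemma one_nz (I : finType) (x : I -> nat) :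
  (forall i j, 0 < x i -> 0 < x j -> i = j)%N ->
  (forall i, x i = 0)%N \/
  exists i0, (\sum_i x i = x i0)%N /\ (forall i, i != i0 -> x i = 0%N).
Proof.
move=> H; case: (pickP (fun i => 0 < x i)%N) => [i0 Hi0|H0]; last first.
  by left => i; apply/eqP; rewrite -leqn0 leqNgt H0.
right; exists i0.
have Hz : forall i, i != i0 -> x i = 0%N.
  move=> i Hi; apply/eqP; rewrite -leqn0 leqNgt; apply/negP => Hp.
  by move: Hi; rewrite (H i i0 Hp Hi0) eqxx.
split => //; rewrite (bigD1 i0) //= big1 ?addn0 //.
Qed.

Lemma ndir_sum es bc :
  n_dirichlet es bc = (\sum_v ((deg es v == 1%N) && bc v))%N.
Proof.
rewrite /n_dirichlet -sum1_card big_mkcond /=; apply: eq_bigr => v _.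
rewrite !inE has_count -/(deg es v); case: (deg es v) => [|[|n]] //=; by case: (bc v).
Qed.

Section Split.
Variables (es : seq (V * V)) (bc : V -> bool) (u : V) (s : nat)
  (parts : 'I_s -> seq (V * V)).
Hypothesis Hu : (1 < deg es u)%N.
Hypothesis Hperm : perm_eq (flatten [seq parts i | i <- enum 'I_s]) es.
Hypothesis Hdeg1 : forall i, deg (parts i) u = 1%N.
Hypothesis Hint : forall i j, i != j -> vset (parts i) :&: vset (parts j) = [set u]%SET.

Lemma amo v : v != u -> forall i j,
  (0 < deg (parts i) v -> 0 < deg (parts j) v -> i = j)%N.
Proof.
move=> vu i j Hi Hj; apply/eqP; apply/negPn/negP => ij.
have := Hint _ _ ij; move/setP/(_ v).
by rewrite finset.in_setI !in_vset Hi Hj finset.in_set1 (negbTE vu).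
Qed.

Lemma s_eq : deg es u = s.
Proof.
rewrite (@deg_split _ _ _ _ Hperm) (eq_bigr (fun _ => 1%N)) => [|i _]; last exact: Hdeg1.
by rewrite sum1_card card_ord.
Qed.

Lemma d_split :
  (\sum_i n_dirichlet (parts i) (bc_at bc u false) = n_dirichlet es bc)%N.
Proof.
rewrite ndir_sum; under eq_bigr do rewrite ndir_sum.
rewrite exchange_big /=; apply: eq_bigr => v _.
case: (eqVneq v u) => [->|vu].
  rewrite big1 => [|i _]; last by rewrite /bc_at eqxx andbF.
  by rewrite gtn_eqF.
under eq_bigr do rewrite /bc_at (negbTE vu).
rewrite (@deg_split _ _ _ _ Hperm).
case: (@one_nz _ (fun i => deg (parts i) v) (@amo v vu)) => [H0|[i0 [-> Hz]]].
  rewrite big1 => [|i _]; last by rewrite H0.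
  by rewrite big1 // => i _; apply: H0.
rewrite (bigD1 i0) //= big1 ?addn0 // => i /Hz ->; done.
Qed.

Lemma dD_split i : n_dirichlet (parts i) (bc_at bc u true) =
  (n_dirichlet (parts i) (bc_at bc u false)).+1.
Proof.
rewrite !ndir_sum (bigD1 u) //= [in RHS](bigD1 u) //= /bc_at !eqxx Hdeg1 /=.
rewrite add1n add0n; congr S; apply: eq_bigr => v /negbTE ->; done.
Qed.

End Split.
End Comb.

Section Anal.
Variable R : realType.
Variable V : finType.
Implicit Types (es : seq (V * V)).

Definition phi (n : nat) : R := if (0 < n)%N then n%:R else 1.

Lemma prod_vset es : \prod_(v in vset es) ((deg es v)%:R : R) = \prod_v phi (deg es v).
Proof. by rewrite big_mkcond; apply: eq_bigr => v _; rewrite in_vset /phi. Qed.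

Lemma P_split es u s (parts : 'I_s -> seq (V * V)) :
  (1 < deg es u)%N ->
  perm_eq (flatten [seq parts i | i <- enum 'I_s]) es ->
  (forall i, deg (parts i) u = 1%N) ->
  (forall i j, i != j -> vset (parts i) :&: vset (parts j) = [set u]%SET) ->
  s%:R * \prod_i \prod_(v in vset (parts i)) ((deg (parts i) v)%:R : R)
  = \prod_(v in vset es) (deg es v)%:R.
Proof.
move=> Hu Hperm Hdeg1 Hint.
rewrite prod_vset; under eq_bigr do rewrite prod_vset.
rewrite exchange_big /= (bigD1 u) //= [in RHS](bigD1 u) //=.
rewrite big1 => [|i _]; last by rewrite Hdeg1.
rewrite mul1r /phi (@s_eq _ _ _ _ _ Hperm Hdeg1) -/phi.
have -> : (0 < s)%N by rewrite -(@s_eq _ _ _ _ _ Hperm Hdeg1); apply: ltn_trans Hu.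
congr (_ * _); apply: eq_bigr => v vu.
rewrite (@deg_split _ _ _ _ v Hperm).
case: (@one_nz _ (fun i => deg (parts i) v) (@amo _ u _ _ Hint v vu)) => [H0|[i0 [-> Hz]]].
  by rewrite big1 => [|i _]; rewrite ?H0 // big1.
rewrite (bigD1 i0) //= big1 ?mulr1 // => i /Hz ->; done.
Qed.


Definition Tt (t : R) (n : nat) : R := t ^ (1%:Z - n%:Z).
Definition Kt es (t : R) : R := 2 ^- size es * \prod_(v in vset es) ((deg es v)%:R : R)
  * expR ((size es)%:R * t * pi).

Lemma mtE es bc (t : R) : main_term es bc t = Tt t (n_dirichlet es bc) * Kt es t.
Proof. by rewrite /main_term /Tt /Kt !mulrA. Qed.

Lemma TtE (t : R) n : t != 0 -> Tt t n = t / t ^+ n.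
Proof. by move=> t0; rewrite /Tt exprzDr ?unitfE // expr1z -exprnN. Qed.

Lemma Kt_gt0 es (t : R) : 0 < Kt es t.
Proof.
rewrite /Kt !mulr_gt0 ?expR_gt0 ?invr_gt0 ?exprn_gt0 //.
by apply: prodr_gt0 => v; rewrite in_vset ltr0n.
Qed.

Lemma Tt_gt0 (t : R) n : 0 < t -> 0 < Tt t n.
Proof. by move=> t0; rewrite /Tt exprz_gt0. Qed.

Lemma mt_gt0 es bc (t : R) : 0 < t -> 0 < main_term es bc t.
Proof. by move=> t0; rewrite mtE mulr_gt0 ?Tt_gt0 ?Kt_gt0. Qed.

Lemma T_split (t : R) s j (n : 'I_s -> nat) : t != 0 ->
  Tt t (n j) * \prod_(k < s | k != j) Tt t (n k).+1 = Tt t (\sum_k n k)%N.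
Proof.
move=> t0; rewrite !TtE //.
have E k : t / t ^+ (n k).+1 = (t ^+ n k)^-1.
  by rewrite exprSr invfM mulrCA divff // mulr1.
rewrite (eq_bigr (fun k => (t ^+ n k)^-1)) => [|k _]; last by rewrite TtE // E.
by rewrite [in RHS](bigD1 j) //= exprD invfM prodfV prodrXr mulrA.
Qed.

Lemma K_split es u s (parts : 'I_s -> seq (V * V)) (t : R) :
  (1 < deg es u)%N ->
  perm_eq (flatten [seq parts i | i <- enum 'I_s]) es ->
  (forall i, deg (parts i) u = 1%N) ->
  (forall i j, i != j -> vset (parts i) :&: vset (parts j) = [set u]%SET) ->
  Kt es t = s%:R * \prod_i Kt (parts i) t.
Proof.
move=> Hu Hperm Hdeg1 Hint.
rewrite /Kt !big_split /= -(@P_split _ _ _ _ Hu Hperm Hdeg1 Hint).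
rewrite -expR_sum (@size_split _ _ _ _ Hperm) prodfV prodrXr natr_sum !mulr_suml.
ring.
Qed.


Lemma key_split es bc u s (parts : 'I_s -> seq (V * V)) j (t : R) :
  0 < t ->
  (1 < deg es u)%N ->
  perm_eq (flatten [seq parts i | i <- enum 'I_s]) es ->
  (forall i, deg (parts i) u = 1%N) ->
  (forall i j, i != j -> vset (parts i) :&: vset (parts j) = [set u]%SET) ->
  main_term (parts j) (bc_at bc u false) t *
    \prod_(k < s | k != j) main_term (parts k) (bc_at bc u true) t
  = main_term es bc t / s%:R.
Proof.
move=> t0 Hu Hperm Hdeg1 Hint.
have s0 : (0 < s)%N by rewrite -(@s_eq _ _ _ _ _ Hperm Hdeg1); apply: ltn_trans Hu.
rewrite (eq_bigr (fun k => Tt t (n_dirichlet (parts k) (bc_at bc u false)).+1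
   * Kt (parts k) t)) => [|k _]; last by rewrite mtE dD_split.
rewrite big_split /= mtE mulrACA T_split ?gt_eqF //.
rewrite mtE (@K_split _ _ _ _ t Hu Hperm Hdeg1 Hint) [X in s%:R * X](bigD1 j) //=.
rewrite (@d_split _ es bc u s parts Hu Hperm Hint).
have sn : (s%:R : R) != 0 by rewrite pnatr_eq0 -lt0n.
by field.
Qed.

Lemma cvg_sum_gen (I : Type) (r : seq I) (P : pred I) (f : I -> R -> R) (l : I -> R) :
  (forall i, f i t @[t --> +oo] --> (l i : R)) ->
  (\sum_(i <- r | P i) f i t) @[t --> +oo] --> \sum_(i <- r | P i) l i.
Proof.
move=> H; elim: r => [|a r IH].
  under eq_fun do rewrite big_nil.
  rewrite big_nil; exact: cvg_cst.
under eq_fun do rewrite big_cons.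
rewrite big_cons; case: (P a) => //.
exact: (cvgD (H a) IH).
Qed.

Lemma cvg_prod_gen (I : Type) (r : seq I) (P : pred I) (f : I -> R -> R) (l : I -> R) :
  (forall i, f i t @[t --> +oo] --> (l i : R)) ->
  (\prod_(i <- r | P i) f i t) @[t --> +oo] --> \prod_(i <- r | P i) l i.
Proof.
move=> H; elim: r => [|a r IH].
  under eq_fun do rewrite big_nil.
  rewrite big_nil; exact: cvg_cst.
under eq_fun do rewrite big_cons.
rewrite big_cons; case: (P a) => //.
exact: (cvgM (H a) IH).
Qed.

Definition bval (b0 b1 : bool) (t : R) : R :=
  match b0, b1 with
  | true, true => sinhR (t * pi) / t
  | true, false => coshR (t * pi)
  | false, true => coshR (t * pi)
  | false, false => t * sinhR (t * pi)
  end.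

Lemma base_val b0 b1 (t : R) : 0 < t ->
  base_charfun b0 b1 (0 +i* t) = (bval b0 b1 t)%:C.
Proof.
move=> t0.
have tn : (0 +i* t) != 0 by rewrite eq_complex /= negb_and orbC gt_eqF.
case: b0; case: b1 => /=.
- rewrite /Spi (negbTE tn).
  apply/(canLR (mulfK tn)).
  rewrite /csin /= !mul0r !mulr0 !subr0 add0r sin0 cos0 mul0r mul1r.
  apply/eqP; rewrite eq_complex /= !mulr0 !mul0r subr0 addr0 eqxx /=.
  by apply/eqP; rewrite divfK // gt_eqF.
- by rewrite /dSpi /ccos /= !(mul0r, mulr0, subr0, add0r, sin0, cos0, mul1r, oppr0).
- by rewrite /Cpi /ccos /= !(mul0r, mulr0, subr0, add0r, sin0, cos0, mul1r, oppr0).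
- rewrite /dCpi /csin /= !(mul0r, mulr0, subr0, add0r, sin0, cos0, mul1r, oppr0).
  apply/eqP; rewrite eq_complex /=; apply/andP; split; apply/eqP; ring.
Qed.

Lemma ndir1 (a b : V) bc : a != b -> n_dirichlet [:: (a, b)] bc = (bc a + bc b)%N.
Proof.
move=> ab; rewrite ndir_sum (bigD1 a) //= (bigD1 b) /=; last by rewrite eq_sym.
rewrite big1 => [|v /andP [va vb]]; last first.
  by rewrite /deg /incident /= [a == v]eq_sym [b == v]eq_sym (negbTE va) (negbTE vb).
rewrite /deg /incident /= !eqxx /= orbT /= !addn0.
by case: (bc a); case: (bc b).
Qed.

Lemma main1 (a b : V) bc (t : R) : a != b ->
  main_term [:: (a, b)] bc t = Tt t (bc a + bc b) * (2^-1 * expR (t * pi)).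
Proof.
move=> ab; rewrite mtE /Kt prod_vset big1 => [|v _]; last first.
  by rewrite /phi /deg /=; case: (incident v (a, b)).
by rewrite ndir1 //= mul1r expr1 mulr1.
Qed.

Lemma base_ratio b0 b1 (t : R) : 0 < t ->
  bval b0 b1 t / (Tt t (b0 + b1) * (2^-1 * expR (t * pi))) =
  1 + (if b0 then (if b1 then -1 else 1) else (if b1 then 1 else -1)) * (expR (- (t * pi)) * expR (- (t * pi))).
Proof.
move=> t0; rewrite TtE ?gt_eqF //.
have E0 : expR (t * pi) != 0 by rewrite gt_eqF ?expR_gt0.
have tn : t != 0 by rewrite gt_eqF.
case: b0; case: b1 => /=; rewrite /coshR /sinhR expRN ?addn0 ?add0n ?expr1 ?expr0 ?expr2. all: field; rewrite ?E0 ?tn ?pnatr_eq0 //=.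
Qed.

Lemma cvg_h : expR (- (t * pi)) @[t --> +oo] --> (0 : R).
Proof.
apply: (@squeeze_cvgr _ _ _ _ (fun=> 0) (fun t => expR (- t))); last 2 first.
- exact: cvg_cst.
- exact: (@cvgr_expR R).
near=> t.
have t0 : 0 < t by near: t; apply: nbhs_pinfty_gt; exact: num_real.
rewrite expR_ge0 /= ler_expR lerN2 ler_peMr ?ltW //.
by rewrite (lt_le_trans _ (pi_ge2 R)) // ltr1n.
Unshelve. all: end_near.
Qed.

Definition Inv es (bc : V -> bool) (D : R[i] -> R[i]) :=
  (forall t : R, 0 < t -> D (0 +i* t) = (complex.Re (D (0 +i* t)))%:C) /\
  ((complex.Re (D (0 +i* t)) / main_term es bc t) @[t --> +oo] --> (1 : R)).

Lemma Inv_base (a b : V) bc : a != b ->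
  Inv [:: (a, b)] bc (base_charfun (bc a) (bc b)).
Proof.
move=> ab; split => [t t0|]; first by rewrite base_val.
set c : R := if bc a then (if bc b then -1 else 1) else (if bc b then 1 else -1).
have H : (1 + c * (expR (- (t * pi)) * expR (- (t * pi)))) @[t --> +oo] --> (1 : R).
  rewrite -[X in _ --> X]addr0 -(mulr0 c) -(mulr0 (0:R)).
  apply: cvgD; first exact: cvg_cst.
  apply: cvgMl_tmp; apply: cvgM; exact: cvg_h.
apply: cvg_trans H; apply: near_eq_cvg; near=> t.
have t0 : 0 < t by near: t; apply: nbhs_pinfty_gt; exact: num_real.
by rewrite base_val // main1 // base_ratio.
Unshelve. all: end_near.
Qed.

Lemma Inv_split es bc u s (parts : 'I_s -> seq (V * V)) (DD DN : 'I_s -> R[i] -> R[i]) :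
  (1 < deg es u)%N ->
  perm_eq (flatten [seq parts i | i <- enum 'I_s]) es ->
  (forall i, deg (parts i) u = 1%N) ->
  (forall i j, i != j -> vset (parts i) :&: vset (parts j) = [set u]%SET) ->
  (forall i, Inv (parts i) (bc_at bc u true) (DD i)) ->
  (forall i, Inv (parts i) (bc_at bc u false) (DN i)) ->
  Inv es bc (fun rho => \sum_(i < s) DN i rho * \prod_(k < s | k != i) DD k rho).
Proof.
move=> Hu Hperm Hdeg1 Hint ID IN.
have s0 : (0 < s)%N by rewrite -(@s_eq _ _ _ _ _ Hperm Hdeg1); apply: ltn_trans Hu.
have sn : (s%:R : R) != 0 by rewrite pnatr_eq0 -lt0n.
have Hval : forall t : R, 0 < t ->
  \sum_(i < s) DN i (0 +i* t) * \prod_(k < s | k != i) DD k (0 +i* t) =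
  (\sum_(i < s) complex.Re (DN i (0 +i* t)) *
     \prod_(k < s | k != i) complex.Re (DD k (0 +i* t)))%:C.
  move=> t t0; rewrite rmorph_sum; apply: eq_bigr => i _.
  rewrite rmorphM rmorph_prod {1}((IN i).1 t t0); congr (_ * _).
  by apply: eq_bigr => k _; rewrite {1}((ID k).1 t t0).
split.
  by move=> t t0 /=; rewrite Hval.
have HG : (s%:R^-1 * \sum_(j < s)
   ((complex.Re (DN j (0 +i* t)) / main_term (parts j) (bc_at bc u false) t) *
    \prod_(k < s | k != j)
      (complex.Re (DD k (0 +i* t)) / main_term (parts k) (bc_at bc u true) t)))
   @[t --> +oo] --> (s%:R^-1 * \sum_(j < s) (1 * \prod_(k < s | k != j) (1 : R))).
  apply: cvgMl_tmp; apply: cvg_sum_gen => j; apply: cvgM; first exact: (IN j).2.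
  by apply: cvg_prod_gen => k; exact: (ID k).2.
have E1 : s%:R^-1 * \sum_(j < s) (1 * \prod_(k < s | k != j) (1 : R)) = 1.
  rewrite (eq_bigr (fun _ => 1)) => [|j _]; last by rewrite big1_eq mul1r.
  by rewrite sumr_const card_ord mulVf.
rewrite E1 in HG.
apply: cvg_trans HG; apply: near_eq_cvg; near=> t.
have t0 : 0 < t by near: t; apply: nbhs_pinfty_gt; exact: num_real.
rewrite /= Hval //=.
rewrite mulr_suml mulr_sumr; apply: eq_bigr => j _.
rewrite prodf_div mulrACA -invfM (@key_split _ bc _ _ _ j _ t0 Hu Hperm Hdeg1 Hint).
have Mn : main_term es bc t != 0 by rewrite gt_eqF ?mt_gt0.
by rewrite invf_div mulrCA mulKf.
Unshelve. all: end_near.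
Qed.

Lemma charfun_Inv es bc D : charfun es bc D -> Inv es bc D.
Proof.
elim => [a b bc' ab | es' bc' u s parts DD DN _ Hu Hperm _ Hdeg1 Hint _ IHD _ IHN].
  exact: Inv_base.
exact: (@Inv_split es' bc' u s parts DD DN Hu Hperm Hdeg1 Hint IHD IHN).
Qed.
End Anal.

Theorem lemma2 (R : realType) (V : finType) (es : seq (V * V))
  (bc : V -> bool) (Delta0 : R[i] -> R[i]) :
  is_tree es ->
  charfun es bc Delta0 ->
  exists eps : R -> R[i],
    (complex.Re (eps tau) @[tau --> +oo] --> 0) /\
    (complex.Im (eps tau) @[tau --> +oo] --> 0) /\
    (forall tau : R, 0 < tau ->
       Delta0 (0 +i* tau) = (main_term es bc tau)%:C * (1 + eps tau)).
Proof.
move=> _ /charfun_Inv [H1 H2].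
exists (fun t => (complex.Re (Delta0 (0 +i* t)) / main_term es bc t - 1)%:C).
split; [|split].
- rewrite -[X in _ --> X](subrr (1:R)).
  apply: cvgB => //; exact: cvg_cst.
- exact: cvg_cst.
- move=> t t0; rewrite {1}H1 //.
  have Mn : main_term es bc t != 0 by rewrite gt_eqF ?mt_gt0.
  have -> : (1 : R[i]) = (1 : R)%:C by [].
  rewrite -rmorphD -rmorphM; congr (_%:C).
  by field.
Qed.
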